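(* Let $d\ge 3$, $2\le k\le d$ and $n\ge d$. Then $\chi^{\mathsf{s}}_{d,k}(n)=n$.
   Context: A $k$-uniform hypergraph $H=(V,E)$ consists of a finite set $V$ and $E\subseteq\binom{V}{k}$. A (linear) embedding of $H$ into $\mathbb{R}^d$ is a map $\phi:V(H)\to\mathbb{R}^d$ with $\dim\operatorname{aff}\phi(e)=k-1$ for every edge $e$ and $\operatorname{conv}\phi(e_1)\cap\operatorname{conv}\phi(e_2)=\operatorname{conv}\phi(e_1\cap e_2)$ for all edges $e_1,e_2$. $\mathcal{E}_{d,k}$ is the set of $k$-uniform hypergraphs admitting such an embedding into $\mathbb{R}^d$. A strong $c$-coloring of $H$ is a map $\kappa:V(H)\to\{1,\dots,c\}$ with $|\kappa(e)|=k$ for every edge $e$; $\chi^{\mathsf{s}}(H)$ is the least such $c$. $\chi^{\mathsf{s}}_{d,k}(n)=\max\{\chi^{\mathsf{s}}(H): H\in\mathcal{E}_{d,k},\ |V(H)|=n\}$. *)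

(* Defs.v *)
From Stdlib Require Import Reals.
From mathcomp Require Import all_boot.

Set Implicit Arguments.
Unset Strict Implicit.
Unset Printing Implicit Defensive.

Definition in_conv (n d : nat) (phi : 'I_n -> 'I_d -> R) (S : {set 'I_n})
    (x : 'I_d -> R) : Prop :=
  exists lam : 'I_n -> R,
    (forall v, Rle R0 (lam v)) /\
    \big[Rplus/R0]_(v in S) lam v = R1 /\
    (forall i : 'I_d, \big[Rplus/R0]_(v in S) Rmult (lam v) (phi v i) = x i).

Definition aff_indep (n d : nat) (phi : 'I_n -> 'I_d -> R) (S : {set 'I_n}) : Prop :=
  forall mu : 'I_n -> R,
    \big[Rplus/R0]_(v in S) mu v = R0 ->
    (forall i : 'I_d, \big[Rplus/R0]_(v in S) Rmult (mu v) (phi v i) = R0) ->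
    forall v, v \in S -> mu v = R0.

Definition k_uniform (n k : nat) (E : {set {set 'I_n}}) : Prop :=
  forall e, e \in E -> #|e| = k.

Definition is_embedding (n d : nat) (E : {set {set 'I_n}})
    (phi : 'I_n -> 'I_d -> R) : Prop :=
  (forall e, e \in E -> aff_indep phi e) /\
  (forall e1 e2, e1 \in E -> e2 \in E -> forall x : 'I_d -> R,
     (in_conv phi e1 x /\ in_conv phi e2 x) <-> in_conv phi (e1 :&: e2) x).

Definition in_Edk (d k n : nat) (E : {set {set 'I_n}}) : Prop :=
  k_uniform k E /\ exists phi : 'I_n -> 'I_d -> R, is_embedding E phi.

Definition strong_colorable (n : nat) (E : {set {set 'I_n}}) (c : nat) : bool :=
  [exists kappa : {ffun 'I_n -> 'I_c}, [forall e in E, #|kappa @: e| == #|e|]].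

Lemma strong_colorable_n (n : nat) (E : {set {set 'I_n}}) :
  exists c, strong_colorable E c.
Proof.
exists n; apply/existsP; exists [ffun v => v]; apply/forallP => e; apply/implyP => _.
apply/eqP; rewrite (@eq_imset _ _ _ (fun v => v)); last by move=> v; rewrite ffunE.
by rewrite imset_id.
Qed.

Definition chi_s (n : nat) (E : {set {set 'I_n}}) : nat :=
  ex_minn (strong_colorable_n E).

(* Main.v *)
Require Import Defs.
From Stdlib Require Import Reals.
From mathcomp Require Import all_boot all_order all_algebra.
From mathcomp Require Import Rstruct zify ring lra.
Import Order.TTheory GRing.Theory Num.Theory.
Local Open Scope ring_scope.

Set Implicit Arguments.
Unset Strict Implicit.
Definition mc (n d : nat) : 'I_n -> 'I_d -> R := fun v i => (val v)%:R ^+ i.+1.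

Lemma lin_fun n d (S : {set 'I_n}) (lam : 'I_n -> R) (q : {poly R}) :
  (size q <= d.+1)%N ->
  \sum_(v in S) lam v * q.[(val v)%:R] =
  q`_0 * \sum_(v in S) lam v + \sum_(i < d) q`_i.+1 * \sum_(v in S) lam v * mc v i.
Proof.
move=> Hq.
under eq_bigr => v _ do rewrite (horner_coef_wide _ Hq) mulr_sumr.
rewrite exchange_big big_ord_recl /=; congr (_ + _).
  by rewrite mulr_sumr; apply: eq_bigr => v _; rewrite expr0 mulr1 mulrC.
apply: eq_bigr => i _; rewrite mulr_sumr; apply: eq_bigr => v _.
by rewrite /mc mulrCA.
Qed.

Lemma sumE n (S : {set 'I_n}) (F : 'I_n -> R) :
  \big[Rplus/R0]_(v in S) F v = \sum_(v in S) F v.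
Proof. by []. Qed.

Lemma aff_mc n d (e : {set 'I_n}) : (#|e| <= d)%N -> aff_indep (@mc n d) e.
Proof.
move=> he mu H0 H1 w we.
pose q : {poly R} := \prod_(u <- enum (e :\ w)) ('X - ((val u)%:R)%:P).
have Hq : (size q <= d.+1)%N.
  rewrite /q size_prod_XsubC -cardE ltnS.
  by apply: leq_trans he; rewrite (cardsD1 w e) we.
have H := lin_fun e mu Hq.
have H0' : \sum_(v in e) mu v = 0 := H0.
have H1' : forall i, \sum_(v in e) mu v * mc v i = 0 := H1.
have Hz : \sum_(i < d) q`_i.+1 * \sum_(v in e) mu v * mc v i = 0.
  by apply: big1 => i _; rewrite H1' mulr0.
rewrite H0' mulr0 add0r Hz in H.
rewrite (bigD1 w we) /= big1 ?addr0 in H; last first.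
  move=> v /andP [ve vw]; rewrite /q horner_prod.
  rewrite (bigD1_seq v) /= ?enum_uniq ?mem_enum ?inE ?vw ?ve //.
  by rewrite !hornerE subrr /= mulr0 mul0r.
move/eqP: H; rewrite mulf_eq0 => /orP [/eqP //|].
rewrite /q horner_prod prodf_seq_eq0 => /hasP [u]; rewrite mem_enum inE.
case/andP=> uw _; rewrite !hornerE subr_eq0 eqr_nat => /eqP/val_inj Hu.
by move: uw; rewrite Hu inE eqxx.

Qed.

Lemma sum_restr n (A B : {set 'I_n}) (F : 'I_n -> R) :
  (forall v, v \in A -> v \notin B -> F v = 0) ->
  \sum_(v in A) F v = \sum_(v in B :&: A) F v.
Proof.
move=> H; rewrite big_mkcond [RHS]big_mkcond; apply: eq_bigr => v _.
rewrite inE; case vA: (v \in A); case vB: (v \in B) => //=.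
by rewrite H ?vB.
Qed.

Lemma conv_sub n d (phi : 'I_n -> 'I_d -> R) (A B : {set 'I_n}) x :
  A \subset B -> in_conv phi A x -> in_conv phi B x.
Proof.
move=> sAB [lam [l0 [l1 lx]]].
exists (fun v => if v \in A then lam v else 0); split; [|split].
- by move=> v; case: (v \in A) => //; apply: Rle_refl.
- rewrite sumE (sum_restr (B := A)); last by move=> v _ /negbTE ->.
  by rewrite (setIidPl sAB) -l1 sumE; apply: eq_bigr => v ->.
- move=> i; rewrite -lx sumE (sum_restr (B := A)); last by move=> v _ /negbTE ->; exact: mul0r.
  by rewrite (setIidPl sAB) sumE; apply: eq_bigr => v ->.
Qed.

Lemma sep n d (e1 e2 : {set 'I_n}) (rs : seq nat) (s : R) x :
  (size rs <= d)%N -> (forall v, v \in e1 -> (val v \in rs)) ->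
  (forall v : 'I_n, v \in e2 -> v \notin e1 -> 0 < s * \prod_(r <- rs) ((val v)%:R - r%:R)) ->
  in_conv (@mc n d) e1 x -> in_conv (@mc n d) e2 x -> in_conv (@mc n d) (e1 :&: e2) x.
Proof.
move=> Hs H1 H2 [lam [l0 [l1 lx]]] [mu [m0 [m1 mx]]].
pose q : {poly R} := s *: \prod_(r <- rs) ('X - (r%:R)%:P).
have Hq : (size q <= d.+1)%N.
  apply: leq_trans (size_scale_leq _ _) _.
  by rewrite size_prod_XsubC ltnS.
have qE v : q.[v] = s * \prod_(r <- rs) (v - r%:R).
  by rewrite /q hornerZ horner_prod; congr (_ * _); apply: eq_bigr => r _; rewrite !hornerE.
have L1 := lin_fun e1 lam Hq; have L2 := lin_fun e2 mu Hq.
have l1' : \sum_(v in e1) lam v = 1 := l1.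
have m1' : \sum_(v in e2) mu v = 1 := m1.
have lx' : forall i, \sum_(v in e1) lam v * mc v i = x i := lx.
have mx' : forall i, \sum_(v in e2) mu v * mc v i = x i := mx.
rewrite l1' (eq_bigr (fun i : 'I_d => q`_i.+1 * x i)) in L1; last by move=> i _; rewrite lx'.
rewrite m1' (eq_bigr (fun i : 'I_d => q`_i.+1 * x i)) in L2; last by move=> i _; rewrite mx'.
have S1 : \sum_(v in e1) lam v * q.[(val v)%:R] = 0.
  apply: big1 => v ve; rewrite qE (big_rem _ (H1 v ve)) /= subrr mul0r mulr0 mulr0 //.
rewrite S1 in L1; rewrite -L1 in L2.
have Hz : forall v, v \in e2 -> mu v * q.[(val v)%:R] = 0.
  apply: psumr_eq0P => //.
  move=> v ve; case ve1: (v \in e1).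
    by rewrite qE (big_rem _ (H1 v ve1)) /= subrr mul0r mulr0 mulr0.
  apply: mulr_ge0; first by apply/RleP.
  by apply: ltW; rewrite qE; apply: H2 => //; rewrite ve1.
have Hmu : forall v, v \in e2 -> v \notin e1 -> mu v = 0.
  move=> v ve vn; have := Hz v ve; move/eqP; rewrite mulf_eq0 => /orP [/eqP //|].
  by rewrite qE => /eqP H; have := H2 v ve vn; rewrite H ltxx.
exists mu; split; [by []|split].
- by rewrite sumE -(@sum_restr _ e2 e1 mu).
- move=> i; rewrite sumE -(@sum_restr _ e2 e1 (fun v => mu v * mc v i)) ?mx' // => v ve vn.
  by rewrite Hmu ?mul0r.
Qed.

Definition witness n d (e : {set 'I_n}) :=
  exists a : 'I_n, exists rs : seq nat, exists s : R,
    [/\ a \in e, forall u, u \in e -> (a <= u)%N, (size rs <= d)%N,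
        forall v, v \in e -> val v \in rs &
        forall v : 'I_n, v \notin e -> (a < v)%N ->
          0 < s * \prod_(r <- rs) ((val v)%:R - r%:R)].

Lemma embed n d k (E : {set {set 'I_n}}) : (k <= d)%N -> k_uniform k E ->
  (forall e, e \in E -> witness d e) -> is_embedding E (@mc n d).
Proof.
move=> kd kE W; split.
  by move=> e eE; apply: aff_mc; rewrite (kE e eE).
move=> e1 e2 e1E e2E x; split; last first.
  move=> H; split; apply: conv_sub H; [exact: subsetIl | exact: subsetIr].
case=> H1 H2.
have [a1 [rs1 [s1 [a1e a1m rs1s rs1e rs1p]]]] := W e1 e1E.
have [a2 [rs2 [s2 [a2e a2m rs2s rs2e rs2p]]]] := W e2 e2E.
case: (leqP a1 a2) => ha.
  apply: (sep (rs := rs1) (s := s1)) => // v ve2 vn1; apply: rs1p => //.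
  rewrite ltn_neqAle (leq_trans ha (a2m v ve2)) andbT.
  by apply/negP => /eqP/val_inj Hv; move: vn1; rewrite -Hv a1e.
rewrite setIC; apply: (sep (rs := rs2) (s := s2)) => // v ve1 vn2; apply: rs2p => //.
rewrite ltn_neqAle (leq_trans (ltnW ha) (a1m v ve1)) andbT.
by apply/negP => /eqP/val_inj Hv; move: vn2; rewrite -Hv a2e.
Qed.
Lemma blockpos (v m j : nat) : ((v < m)%N || (m + j.*2 <= v)%N) ->
  0 < \prod_(i <- iota m j.*2) ((v%:R : R) - i%:R).
Proof.
elim: j m => [|j IH] m H; first by rewrite big_nil.
rewrite doubleS /= !big_cons mulrA; apply: mulr_gt0; last first.
  by apply: IH; move: H; rewrite doubleS; lia.
case/orP: H => H.
  have h1 : (v%:R : R) - m%:R < 0 by rewrite subr_lt0 ltr_nat.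
  have h2 : (v%:R : R) - m.+1%:R < 0 by rewrite subr_lt0 ltr_nat; lia.
  nra.
have h1 : 0 < (v%:R : R) - m%:R by rewrite subr_gt0 ltr_nat; move: H; rewrite doubleS; lia.
have h2 : 0 < (v%:R : R) - m.+1%:R by rewrite subr_gt0 ltr_nat; move: H; rewrite doubleS; lia.
nra.
Qed.

Lemma card_list n (s : seq nat) : uniq s -> all (fun i => i < n)%N s ->
  #|[set v : 'I_n | val v \in s]| = size s.
Proof.
elim: s => [|i s IH] /=; first by move=> _ _; apply/eqP; rewrite cards_eq0; apply/eqP/setP => v; rewrite !inE.
case/andP=> ni us /andP [hi ha].
have -> : [set v : 'I_n | val v \in i :: s] = Ordinal hi |: [set v : 'I_n | val v \in s].
  by apply/setP => v; rewrite !inE -val_eqE.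
by rewrite cardsU1 IH // inE /= ni.
Qed.

Definition a3 n k x y : nat :=
  if (x < minn y (n - k.-1))%N then x else (n - k.-1).-1.
Definition rl3 n k x y : seq nat :=
  a3 n k x y :: iota (minn y (n - k.-1)) (k.-1)./2.*2 ++
     (if odd k.-1 then [:: n.-1] else [::]).

Lemma all_iota n m h : (m + h <= n)%N -> all (fun i => i < n)%N (iota m h).
Proof. by move=> H; apply/allP => i; rewrite mem_iota; lia. Qed.

Lemma rl3_props n k x y : (3 <= k)%N -> (k <= n)%N -> (x < y)%N -> (y < n)%N ->
  [/\ uniq (rl3 n k x y), all (fun i => i < n)%N (rl3 n k x y),
      x \in rl3 n k x y, y \in rl3 n k x y & size (rl3 n k x y) = k] /\
  [/\ (a3 n k x y < minn y (n - k.-1))%N,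
      (minn y (n - k.-1) + (k.-1)./2.*2 + odd k.-1 <= n)%N,
      (odd k.-1 + (k.-1)./2.*2 = k.-1)%N &
      (forall u, u \in rl3 n k x y -> a3 n k x y <= u)%N].
Proof.
move=> k3 kn xy yn.
have hh := odd_double_half k.-1.
rewrite /rl3 /a3.
move: hh; set h := (k.-1)./2.*2; set M := (n - k.-1)%N; case: (odd k.-1) => /= hh;
case: (leqP y M) => yM; case: ifP => hx.
all: split; [split|split].
all: rewrite ?cats0 /=.
all: try (rewrite ?cat_uniq ?iota_uniq ?mem_cat /= ?mem_iota ?in_cons ?mem_iota /= ?andbT ?orbF; lia).
all: try (rewrite ?all_cat /= ?andbT all_iota ?andbT; lia).
all: try (rewrite ?size_cat size_iota /=; lia).
all: try lia.
all: try (rewrite ?in_cons ?mem_cat ?mem_iota ?in_cons /= ?orbF; lia).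
all: try (by move=> u; rewrite ?in_cons ?mem_cat ?mem_iota ?in_cons /= ?orbF; lia).
Qed.

Lemma pos3 n k x y (v : nat) : (3 <= k)%N -> (k <= n)%N -> (x < y)%N -> (y < n)%N ->
  (v < n)%N -> v \notin rl3 n k x y -> (a3 n k x y < v)%N ->
  0 < (if odd k.-1 then -1 else 1) * \prod_(r <- rl3 n k x y) ((v%:R : R) - r%:R).
Proof.
move=> k3 kn xy yn vn vnot av.
have [[_ _ _ _ _] [am mh hh _]] := rl3_props k3 kn xy yn.
move: vnot am mh hh; rewrite /rl3 big_cons big_cat /=.
set a := a3 n k x y; set m := minn y (n - k.-1); set j := (k.-1)./2.
rewrite in_cons mem_cat mem_iota negb_or negb_or => /andP [va /andP [vb vt]] am mh hh.
have ha : 0 < (v%:R : R) - a%:R by rewrite subr_gt0 ltr_nat.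
have hb : 0 < \prod_(i <- iota m j.*2) ((v%:R : R) - i%:R).
  by apply: blockpos; move: vb; lia.
move: vt mh hh; case: (odd k.-1) => /= vt mh hh.
  rewrite big_cons big_nil mulr1.
  have hc : (v%:R : R) - n.-1%:R < 0 by rewrite subr_lt0 ltr_nat; move: vt; rewrite in_cons orbF; lia.
  have hab := mulr_gt0 ha hb; rewrite mulN1r oppr_gt0 mulrA; nra.
by rewrite big_nil mulr1 mul1r; apply: mulr_gt0.
Qed.

Definition el n k x y : seq nat := if k == 2%N then [:: x; y] else rl3 n k x y.
Definition rl n k x y : seq nat := if k == 2%N then [:: x; y; y] else rl3 n k x y.
Definition am n k x y : nat := if k == 2%N then x else a3 n k x y.
Definition sg (k : nat) : R := if (k != 2%N) && odd k.-1 then -1 else 1.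
Definition ed n k x y : {set 'I_n} := [set v : 'I_n | val v \in el n k x y].

Lemma ed_props n d k x y : (2 <= k)%N -> (k <= d)%N -> (3 <= d)%N -> (d <= n)%N ->
  (x < y)%N -> (y < n)%N ->
  [/\ #|ed n k x y| = k, x \in el n k x y, y \in el n k x y &
    exists a : 'I_n, exists rs : seq nat, exists s : R,
    [/\ a \in ed n k x y, forall u, u \in ed n k x y -> (a <= u)%N, (size rs <= d)%N,
        forall v, v \in ed n k x y -> val v \in rs &
        forall v : 'I_n, v \notin ed n k x y -> (a < v)%N ->
          0 < s * \prod_(r <- rs) ((val v)%:R - r%:R)]].
Proof.
move=> k2 kd d3 dn xy yn.
have kn : (k <= n)%N by apply: leq_trans dn.
have amn : (am n k x y < n)%N.
  rewrite /am; case: eqP => hk; first lia.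
  case: (ltnP 2 k) => k3; last lia.
  have [[_ _ _ _ _] [ha _ _ _]] := rl3_props k3 kn xy yn; lia.
rewrite /ed /el; case: eqP => k2'.
  subst k; split => //.
  rewrite (card_list (n:=n)) //= ?in_cons ?in_nil ?orbF ?andbT; lia.
  - by rewrite in_cons eqxx.
  - by rewrite !in_cons eqxx orbT.
  exists (Ordinal amn), [:: x; y; y], 1; split => //=.
  - by rewrite inE /am /= in_cons eqxx.
  - by move=> u; rewrite inE /am /= !in_cons orbF => /orP [] /eqP ->; lia.
  - by move=> v; rewrite inE !in_cons orbF => /orP [] ->; rewrite ?orbT.
  move=> v; rewrite inE !in_cons orbF negb_or /am /= => /andP [vx vy] xv.
  rewrite !big_cons big_nil mulr1 mul1r.
  have h1 : 0 < ((val v)%:R : R) - x%:R by rewrite subr_gt0 ltr_nat.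
  have h2 : ((val v)%:R : R) - y%:R != 0 by rewrite subr_eq0 eqr_nat.
  apply: mulr_gt0 => //; rewrite -expr2 lt_def sqr_ge0 andbT expf_eq0 (negbTE h2) andbF //.
have k3 : (3 <= k)%N by lia.
have [[u1 u2 u3 u4 u5] [ha _ _ hmin]] := rl3_props k3 kn xy yn.
split => //; first by rewrite card_list.
have amE : am n k x y = a3 n k x y by rewrite /am; move/eqP/negbTE: k2' => ->.
exists (Ordinal amn), (rl3 n k x y), (if odd k.-1 then -1 else 1); split => //=.
- by rewrite inE /= amE /rl3 in_cons eqxx.
- by move=> u; rewrite inE /= amE; apply: hmin.
- by move: u5 kd; rewrite /rl3 /=; lia.
- by move=> v; rewrite inE.
move=> v; rewrite inE /= amE => vn av.
by apply: pos3.
Qed.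

Lemma chi_le n (E : {set {set 'I_n}}) c : strong_colorable E c -> (chi_s E <= c)%N.
Proof. by rewrite /chi_s; case: ex_minnP => m _ H; apply: H. Qed.

Lemma chi_col n (E : {set {set 'I_n}}) : strong_colorable E (chi_s E).
Proof. by rewrite /chi_s; case: ex_minnP. Qed.

Lemma col_n n (E : {set {set 'I_n}}) : strong_colorable E n.
Proof.
apply/existsP; exists [ffun v => v]; apply/forallP => e; apply/implyP => _.
apply/eqP; rewrite (@eq_imset _ _ _ (fun v => v)); last by move=> v; rewrite ffunE.
by rewrite imset_id.
Qed.

Lemma col_ge n (E : {set {set 'I_n}}) c :
  (forall x y : 'I_n, x != y -> exists e, e \in E /\ x \in e /\ y \in e) ->
  strong_colorable E c -> (n <= c)%N.
Proof.
move=> cov /existsP [kap /forallP H]; rewrite leqNgt; apply/negP => cn.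
have : ~~ injectiveb kap.
  apply/negP => /injectiveP inj; have := leq_card _ inj; rewrite !card_ord; lia.
case/injectivePn => x [y xy kxy].
have [e [eE [xe ye]]] := cov x y xy.
have := H e; rewrite eE /= => /imset_injP inj'.
by move/eqP: xy; apply; apply: inj'.
Qed.

Unset Implicit Arguments.
Local Close Scope ring_scope.

Theorem mainTheorem12 (d k n : nat) (hd : 3 <= d) (hk2 : 2 <= k) (hkd : k <= d)
    (hn : d <= n) :
  (exists E : {set {set 'I_n}}, in_Edk d k E /\ chi_s E = n) /\
  (forall E : {set {set 'I_n}}, in_Edk d k E -> chi_s E <= n).
Proof.
split; last by move=> E _; apply: chi_le; apply: col_n.
pose E := [set e : {set 'I_n} | [exists x : 'I_n, exists y : 'I_n,
              (x < y)%N && (e == ed n k x y)]].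
have Eok : forall e, e \in E -> exists x y : 'I_n, (x < y)%N /\ e = ed n k x y.
  move=> e; rewrite inE => /existsP [x /existsP [y /andP [xy /eqP ->]]].
  by exists x, y.
have cov : forall x y : 'I_n, x != y -> exists e, e \in E /\ x \in e /\ y \in e.
  have cov' : forall x y : 'I_n, (x < y)%N -> exists e, e \in E /\ x \in e /\ y \in e.
    move=> x y xy; have [_ hx hy _] := ed_props hk2 hkd hd hn xy (ltn_ord y).
    exists (ed n k x y); split; last by rewrite !inE.
    by rewrite inE; apply/existsP; exists x; apply/existsP; exists y; rewrite xy eqxx.
  move=> x y; rewrite neq_ltn => /orP [] H.
    exact: cov'.
  by have [e [eE [ye xe]]] := cov' _ _ H; exists e.
exists E; split; last first.
  apply/eqP; rewrite eqn_leq; apply/andP; split; first by apply: chi_le; apply: col_n.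
  by apply: (col_ge cov); apply: chi_col.
split.
  move=> e /Eok [x [y [xy ->]]].
  by have [] := ed_props hk2 hkd hd hn xy (ltn_ord y).
exists (@mc n d); apply: (@embed n d k) => //.
  move=> e /Eok [x [y [xy ->]]].
  by have [] := ed_props hk2 hkd hd hn xy (ltn_ord y).
move=> e /Eok [x [y [xy ->]]].
by have [_ _ _ W] := ed_props hk2 hkd hd hn xy (ltn_ord y).
Qed.
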